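(* Consider the controlled system $\dot x = f(x)+g(x)u$, $y=h(x)$, with $x\in\mathbb{R}^{d_x}$, where $f,g,h$ are sufficiently many times differentiable, and let $\mathcal{S}\subset\mathbb{R}^{d_x}$ be open. Suppose that for some $j\in\{2,\dots,d_x\}$ the map $\mathbf{H}_j$ is an open map on $\mathcal{S}$. Then Property $\mathcal{B}(j)$ is satisfied.
   Context: $\mathbf{H}_i(x)=(h(x),L_fh(x),\dots,L_f^{i-1}h(x))\in\mathbb{R}^i$, where $L_f$ denotes the Lie derivative along $f$. Property $\mathcal{B}(j)$: for any $(x_a,x_b)\in\mathcal{S}^2$ with $x_a\ne x_b$ and $\mathbf{H}_j(x_a)=\mathbf{H}_j(x_b)$, there exists a sequence $(x_{a,k},x_{b,k})$ in $\mathcal{S}^2$ converging to $(x_a,x_b)$ such that for all $k$, $\mathbf{H}_j(x_{a,k})=\mathbf{H}_j(x_{b,k})$ and the Jacobian $\frac{\partial\mathbf{H}_{j-1}}{\partial x}$ has full rank (rank $j-1$) at $x_{a,k}$ or at $x_{b,k}$. *)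

(* Defs.v *)
From HB Require Import structures.
From mathcomp Require Import all_boot all_order all_algebra.
From mathcomp Require Import all_classical all_reals all_analysis.
Set Implicit Arguments. Unset Strict Implicit. Unset Printing Implicit Defensive.
Import Order.TTheory GRing.Theory Num.Theory.
Import numFieldNormedType.Exports.
Local Open Scope classical_set_scope.
Local Open Scope ring_scope.

Fixpoint Ck (R : realType) (n : nat) (V : normedModType R) (k : nat)
    (F : 'rV[R]_n -> V) : Prop :=
  match k with
  | 0 => continuous F
  | k'.+1 => (forall x, differentiable F x) /\
             (forall v : 'rV[R]_n, Ck k' (fun x => 'D_v F x))
  end.

Definition lie (R : realType) (n : nat) (f : 'rV[R]_n -> 'rV[R]_n)
    (phi : 'rV[R]_n -> R) : 'rV[R]_n -> R :=
  fun x => 'D_(f x) phi x.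

Definition lieN (R : realType) (n : nat) (f : 'rV[R]_n -> 'rV[R]_n)
    (h : 'rV[R]_n -> R) (k : nat) : 'rV[R]_n -> R :=
  iter k (lie f) h.

Definition Hmap (R : realType) (n : nat) (f : 'rV[R]_n -> 'rV[R]_n)
    (h : 'rV[R]_n -> R) (i : nat) (x : 'rV[R]_n) : 'rV[R]_i :=
  \row_(k < i) lieN f h k x.

Definition jacH (R : realType) (n : nat) (f : 'rV[R]_n -> 'rV[R]_n)
    (h : 'rV[R]_n -> R) (i : nat) (x : 'rV[R]_n) : 'M[R]_(i, n) :=
  \matrix_(k < i, l < n) 'D_(delta_mx 0 l : 'rV[R]_n) (lieN f h k) x.

Definition open_map_on (R : realType) (n m : nat)
    (H : 'rV[R]_n -> 'rV[R]_m) (S : set 'rV[R]_n) : Prop :=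
  forall U : set 'rV[R]_n, open U -> U `<=` S -> open (H @` U).

Definition PropertyB (R : realType) (n : nat) (f : 'rV[R]_n -> 'rV[R]_n)
    (h : 'rV[R]_n -> R) (S : set 'rV[R]_n) (j : nat) : Prop :=
  forall xa xb : 'rV[R]_n, S xa -> S xb -> xa != xb ->
    Hmap f h j xa = Hmap f h j xb ->
    exists (xak xbk : nat -> 'rV[R]_n),
      (forall k, S (xak k) /\ S (xbk k)) /\
      (fun k => (xak k, xbk k)) @ \oo --> (xa, xb) /\
      (forall k, Hmap f h j (xak k) = Hmap f h j (xbk k) /\
         (\rank (jacH f h j.-1 (xak k)) = j.-1 \/
          \rank (jacH f h j.-1 (xbk k)) = j.-1)).

(* Main.v *)
Require Import Defs.
From HB Require Import structures.
From mathcomp Require Import all_boot all_order all_algebra.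
From mathcomp Require Import all_classical all_reals all_analysis.
Import Order.TTheory GRing.Theory Num.Theory.
Import numFieldNormedType.Exports.
Local Open Scope classical_set_scope.
Local Open Scope ring_scope.
From mathcomp Require Import ring lra.

HB.instance Definition _ (R : realType) (m n : nat) := Complete.on 'M[R]_(m,n).

Set Implicit Arguments. Unset Strict Implicit.
Section Norms.
Variable R : realType.

Lemma mxnorm_entry m n (M : 'M[R]_(m,n)) i j : `|M i j| <= `|M|.
Proof.
by rewrite [leRHS]/Num.Def.normr/= mx_normrE; exact: (le_bigmax _ _ (i, j)).
Qed.

Lemma mxnorm_le m n (M : 'M[R]_(m,n)) c : 0 <= c -> (forall i j, `|M i j| <= c) -> `|M| <= c.
Proof.
move=> c0 H.
rewrite /Num.Def.normr/= mx_normrE; apply: bigmax_le => // -[i j] _; exact: H.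
Qed.

Lemma mxnorm_mul a k b (u : 'M[R]_(a,k)) (A : 'M[R]_(k,b)) :
  `|u *m A| <= k%:R * `|u| * `|A|.
Proof.
apply: mxnorm_le; first by rewrite !mulr_ge0.
move=> i j; rewrite mxE.
apply: (le_trans (ler_norm_sum _ _ _)).
apply: (@le_trans _ _ (\sum_(l < k) (`|u| * `|A|))).
  apply: ler_sum => l _; rewrite normrM; apply: ler_pM => //; exact: mxnorm_entry.
by rewrite sumr_const card_ord -mulrA mulr_natl.
Qed.

Lemma fixpt n (U : set 'rV[R]_n) (T : 'rV[R]_n -> 'rV[R]_n) (z0 : 'rV[R]_n) :
  closed U -> U z0 -> (forall z, U z -> U (T z)) ->
  (forall z z', U z -> U z' -> `|T z - T z'| <= 2^-1 * `|z - z'|) ->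
  exists z, U z /\ T z = z.
Proof.
move=> cU Uz0 TU Tc.
have ctr : is_contraction (mkfun_fun TU).
  have h0 : 0 <= (2^-1 : R) by rewrite invr_ge0.
  exists (NngNum h0); split; first by rewrite /= invf_lt1 // ltr1n.
  move=> [x y] /= [Ux Uy]; rewrite /self_sub /=.
  by apply: Tc.
have [z Uz Tz] := banach_fixed_point ctr cU (ex_intro _ z0 Uz0).
by exists z; split.
Qed.
End Norms.

Unset Implicit Arguments.
Section Reg.
Variable R : realType.
Variable n : nat.
Implicit Types (V : normedModType R).

Lemma Ck_mono V k (F : 'rV[R]_n -> V) : Ck k.+1 F -> Ck k F.
Proof.
elim: k F => [|k IH] F /=.
  by move=> [d _] x; exact: differentiable_continuous.
by move=> [d H]; split => // v; apply: IH; exact: H.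
Qed.

Lemma Ck_le V a b (F : 'rV[R]_n -> V) : (a <= b)%N -> Ck b F -> Ck a F.
Proof.
move=> /subnKC <-; elim: (b - a)%N => [|c IH]; first by rewrite addn0.
by rewrite addnS => /Ck_mono.
Qed.

Lemma Ck_cst V k (c : V) : Ck k (fun _ : 'rV[R]_n => c).
Proof.
elim: k c => [|k IH] c /=; first by move=> x; exact: cst_continuous.
split => [x|v]; first exact: differentiable_cst.
have -> : (fun x : 'rV[R]_n => 'D_v (fun _ => c) x) = (fun _ => 0).
  by apply: funext => x; rewrite derive_cst.
exact: IH.
Qed.

Lemma Ck_add V k (F G : 'rV[R]_n -> V) :
  Ck k F -> Ck k G -> Ck k (fun x => F x + G x).
Proof.
elim: k F G => [|k IH] F G /=.
  by move=> cF cG x; exact: (continuousD (cF x) (cG x)).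
move=> [dF HF] [dG HG]; split => [x|v].
  exact: (differentiableD (dF x) (dG x)).
have -> : (fun x => 'D_v (fun x0 => F x0 + G x0) x) = (fun x => 'D_v F x + 'D_v G x).
  apply: funext => x.
  exact: (deriveD (diff_derivable (dF x)) (diff_derivable (dG x))).
exact: IH.
Qed.

Lemma Ck_mul k (F G : 'rV[R]_n -> R) :
  Ck k F -> Ck k G -> Ck k (fun x => F x * G x).
Proof.
elim: k F G => [|k IH] F G /=.
  by move=> cF cG x; exact: (continuousM (cF x) (cG x)).
move=> [dF HF] [dG HG]; split => [x|v].
  exact: (differentiableM (dF x) (dG x)).
have -> : (fun x => 'D_v (fun x0 => F x0 * G x0) x) =
          (fun x => F x * 'D_v G x + G x * 'D_v F x).
  apply: funext => x.
  exact: (deriveM (diff_derivable (dF x)) (diff_derivable (dG x))).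
apply: Ck_add; apply: IH => //; apply: Ck_mono => /=; split => //.
Qed.

Lemma Ck_sum k N (F : 'I_N -> 'rV[R]_n -> R) :
  (forall i, Ck k (F i)) -> Ck k (fun x => \sum_(i < N) F i x).
Proof.
elim: N F => [|N IH] F H.
  have -> : (fun x => \sum_(i < 0) F i x) = (fun _ => 0) by apply: funext => x; rewrite big_ord0.
  exact: Ck_cst.
have -> : (fun x => \sum_(i < N.+1) F i x) =
          (fun x => \sum_(i < N) F (widen_ord (leqnSn N) i) x + F ord_max x).
  by apply: funext => x; rewrite big_ord_recr.
by apply: Ck_add => //; apply: IH => i.
Qed.

Lemma Ck_coord k (f : 'rV[R]_n -> 'rV[R]_n) l :
  Ck k f -> Ck k (fun x => f x 0 l).
Proof.
elim: k f => [|k IH] f /=.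
  move=> cf x; apply: (continuous_comp (g := fun M : 'rV[R]_n => M 0 l) (cf x)).
  exact: differentiable_continuous (differentiable_coord _ _ _).
move=> [df Hf]; split => [x|v].
  exact: (differentiable_comp (df x) (differentiable_coord _ _ _)).
have -> : (fun x => 'D_v (fun x0 => f x0 0 l) x) = (fun x => 'D_v f x 0 l).
  by apply: funext => x; rewrite derive_mx ?mxE //; exact: diff_derivable.
exact: IH.
Qed.

Lemma lie_expand (f : 'rV[R]_n -> 'rV[R]_n) (psi : 'rV[R]_n -> R) x :
  differentiable psi x ->
  lie f psi x = \sum_(l < n) f x 0 l * 'D_(delta_mx 0 l) psi x.
Proof.
move=> dpsi; rewrite /lie deriveE // {1}(row_sum_delta (f x)) linear_sum.
by apply: eq_bigr => l _; rewrite linearZ /= deriveE.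
Qed.

Lemma Ck_lie k (f : 'rV[R]_n -> 'rV[R]_n) (psi : 'rV[R]_n -> R) :
  Ck k.+1 f -> Ck k.+1 psi -> Ck k (lie f psi).
Proof.
move=> Cf [dpsi Hpsi].
have -> : lie f psi = (fun x => \sum_(l < n) f x 0 l * 'D_(delta_mx 0 l) psi x).
  by apply: funext => x; exact: lie_expand.
apply: Ck_sum => l; apply: Ck_mul; last exact: Hpsi.
by apply: Ck_coord; apply: Ck_mono.
Qed.

Lemma Ck_lieN j (f : 'rV[R]_n -> 'rV[R]_n) (h : 'rV[R]_n -> R) k :
  Ck j f -> Ck j h -> (k <= j)%N -> Ck (j - k) (lieN f h k).
Proof.
move=> Cf Ch; elim: k => [|k IH] kj; first by rewrite subn0.
have kj' : (k <= j)%N by apply: ltnW.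
have e : (j - k = (j - k.+1).+1)%N by rewrite subnS prednK // subn_gt0.
rewrite /lieN iterS -/(lieN f h k); apply: Ck_lie; rewrite -e //.
  by apply: Ck_le Cf; exact: leq_subr.
exact: IH.
Qed.

End Reg.

Set Implicit Arguments. Unset Strict Implicit.
Section Taylor.
Variable R : realType.
Variable n : nat.

Lemma nearball (x0 : 'rV[R]_n) (Q : 'rV[R]_n -> Prop) :
  (\forall y \near x0, Q y) -> exists d : R, 0 < d /\ forall y, `|y - x0| < d -> Q y.
Proof.
move/nbhs_ballP => [d d0 H]; exists d; split => // y yd; apply: H.
by rewrite -ball_normE /= distrC.
Qed.

Lemma dir_expand (phi : 'rV[R]_n -> R) p w :
  differentiable phi p ->
  'D_w phi p = \sum_(l < n) w 0 l * 'D_(delta_mx 0 l) phi p.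
Proof.
move=> d; rewrite deriveE // {1}(row_sum_delta w) linear_sum.
by apply: eq_bigr => l _; rewrite linearZ /= deriveE.
Qed.

Lemma line_derive (phi : 'rV[R]_n -> R) a w (s : R) :
  differentiable phi (a + s *: w) ->
  is_derive s 1 (fun t => phi (a + t *: w)) ('D_w phi (a + s *: w)).
Proof.
move=> d; set F := (fun t => phi (a + t *: w)).
have E : (fun h : R => h^-1 *: ((F \o shift s) (h *: 1) - F s)) =
         (fun h : R => h^-1 *: ((phi \o shift (a + s *: w)) (h *: w) - phi (a + s *: w))).
  apply: funext => h /=; rewrite /F /shift /=; congr (_ *: (phi _ - _)).
  by rewrite [h%:A]mulr1 scalerDl addrCA addrA.
have D : derivable F s 1 by rewrite /derivable E; exact: diff_derivable.
have := derivableP D.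
suff -> : 'D_1 F s = 'D_w phi (a + s *: w) by [].
by rewrite /derive E.
Qed.

Lemma seg_ball (x0 a b : 'rV[R]_n) (d t : R) :
  `|a - x0| < d -> `|b - x0| < d -> 0 <= t -> t <= 1 ->
  `|a + t *: (b - a) - x0| < d.
Proof.
move=> ad bd t0 t1.
have -> : a + t *: (b - a) - x0 = (1 - t) *: (a - x0) + t *: (b - x0).
  by apply/rowP => i; rewrite !mxE; ring.
apply: (le_lt_trans (ler_normD _ _)); rewrite !normrZ.
rewrite (ger0_norm t0) ger0_norm ?subr_ge0 //.
set M := Num.max `|a - x0| `|b - x0|.
apply: (@le_lt_trans _ _ ((1 - t) * M + t * M)).
  by apply: lerD; apply: ler_wpM2l; rewrite ?subr_ge0 // ?le_max lexx ?orbT.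
by rewrite -mulrDl subrK mul1r /M gt_max ad bd.
Qed.

Lemma taylor (phi : 'rV[R]_n -> R) (x0 : 'rV[R]_n) (e : R) :
  Ck 1 phi -> 0 < e ->
  exists d : R, 0 < d /\ forall a b, `|a - x0| < d -> `|b - x0| < d ->
    `|phi b - phi a - \sum_(l < n) (b - a) 0 l * 'D_(delta_mx 0 l) phi x0|
      <= e * `|b - a|.
Proof.
move=> [dphi cphi] e0.
set e' := e / (n%:R + 1).
have e'0 : 0 < e' by rewrite divr_gt0 // ltr_wpDl.
have H : \forall y \near x0, forall l : 'I_n,
    `|'D_(delta_mx 0 l) phi x0 - 'D_(delta_mx 0 l) phi y| < e'.
  exact: (filter_forall _ (fun l : 'I_n => (cvgrPdist_lt _ _).1 (cphi (delta_mx 0 l) x0) _ e'0)).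
have [d [d0 Hd]] := nearball H.
exists d; split => // a b ad bd.
set w := b - a.
have cont : continuous (fun t : R => phi (a + t *: w)).
  move=> t; apply: differentiable_continuous; apply/derivable1_diffP.
  by case: (line_derive (dphi (a + t *: w))).
have der : forall t : R, t \in `]0, 1[ ->
    is_derive t 1 (fun t => phi (a + t *: w)) ('D_w phi (a + t *: w)).
  by move=> t _; exact: line_derive.
have [c c01 Hc] := MVT_segment ler01 der (continuous_subspaceT cont).
move: Hc; rewrite scale1r scale0r addr0 subr0 mulr1 /w [a + (b - a)]addrC subrK.
have c0 : 0 <= c by move: c01; rewrite in_itv /= => /andP[].
have c1 : c <= 1 by move: c01; rewrite in_itv /= => /andP[].
move=> ->; rewrite dir_expand // -sumrB.
apply: (le_trans (ler_norm_sum _ _ _)).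
apply: (@le_trans _ _ (\sum_(l < n) (`|b - a| * e'))).
  apply: ler_sum => l _; rewrite -mulrBr normrM ler_pM //.
    by apply: (le_trans _ (mxnorm_entry _ 0 l)).
  rewrite distrC ltW //; apply: Hd; exact: seg_ball.
rewrite sumr_const card_ord -mulr_natr.
have nb := normr_ge0 (b - a).
rewrite -mulrA [e * _]mulrC; apply: ler_wpM2l => //.
rewrite /e' mulrAC ler_pdivrMr ?ltr_wpDl //.
by apply: ler_wpM2l; [exact: ltW | rewrite lerDl].
Qed.

End Taylor.

Set Implicit Arguments. Unset Strict Implicit.
Section Aux.
Variable R : realType.

Lemma fin_min k (P : 'I_k -> R -> Prop) :
  (forall i (d d' : R), 0 < d' -> d' <= d -> P i d -> P i d') ->
  (forall i, exists d : R, 0 < d /\ P i d) ->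
  exists d : R, 0 < d /\ forall i, P i d.
Proof.
elim: k P => [|k IH] P mono H.
  by exists 1; split => // -[].
have [d1 [d10 H1]] := IH (fun i => P (lift ord0 i))
  (fun i => mono (lift ord0 i)) (fun i => H (lift ord0 i)).
have [d2 [d20 H2]] := H ord0.
exists (Num.min d1 d2); split; first by rewrite lt_min d10 d20.
move=> i; case: (unliftP ord0 i) => [j ->|->].
  by apply: mono (H1 j); rewrite ?lt_min ?d10 ?d20 ?ge_min ?lexx.
by apply: mono H2; rewrite ?lt_min ?d10 ?d20 ?ge_min ?lexx ?orbT.
Qed.

Lemma deriv0_of_est (g : R -> R) (s : R) :
  (forall eps : R, 0 < eps -> exists d : R, 0 < d /\
     forall h : R, h != 0 -> `|h| < d -> `|g (s + h) - g s| <= eps * `|h|) ->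
  is_derive s 1 g 0.
Proof.
move=> H.
have Hq : (fun h : R => h^-1 *: ((g \o shift s) (h *: 1) - g s)) @ 0^' --> (0 : R).
  apply/cvgrPdist_le => eps e0.
  have [d [d0 Hd]] := H eps e0.
  near=> h.
  have hn0 : h != 0 by near: h; exact: nbhs_dnbhs_neq.
  have hd : `|h| < d by near: h; exact: dnbhs0_lt.
  rewrite sub0r normrN /= /shift /= [h%:A]mulr1 normrZ normfV.
  by rewrite ler_pdivrMl ?normr_gt0 // mulrC [h + s]addrC; apply: Hd.
apply: DeriveDef; first exact: (cvgP _ Hq).
by rewrite /derive; exact: (cvg_lim _ Hq).
Unshelve. all: by end_near. Qed.

Lemma path_const n r (FI : 'rV[R]_n -> 'rV[R]_r) (g0 : 'rV[R]_n -> R)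
    (Jr : 'rV[R]_n -> 'M[R]_(r, n)) (j0 : 'rV[R]_n -> 'rV[R]_n)
    (P : set 'rV[R]_n) (psi : R -> 'rV[R]_n) (K : R) :
  (forall p, P p -> forall eps : R, 0 < eps -> exists d : R, 0 < d /\
     forall b, `|b - p| < d ->
       `|FI b - FI p - (b - p) *m (Jr p)^T| <= eps * `|b - p| /\
       `|g0 b - g0 p - ((b - p) *m (j0 p)^T) 0 0| <= eps * `|b - p|) ->
  (forall p, P p -> exists c : 'rV[R]_r, j0 p = c *m Jr p) ->
  (forall s : R, `|s| < 2 -> P (psi s)) ->
  (forall s s' : R, `|s| < 2 -> `|s'| < 2 -> FI (psi s') = FI (psi s)) ->
  (forall s s' : R, `|s| < 2 -> `|s'| < 2 -> `|psi s' - psi s| <= K * `|s' - s|) ->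
  g0 (psi 1) = g0 (psi 0).
Proof.
move=> T2 RR HP HF HL.
have D : forall s : R, `|s| < 2 -> is_derive s 1 (g0 \o psi) 0.
  move=> s s2; apply: deriv0_of_est => eps e0.
  have [c Hc] := RR _ (HP s s2).
  set A := 1 + r%:R * `|c^T|.
  have A1 : 1 <= A by rewrite lerDl mulr_ge0.
  set M := A * (`|K| + 1).
  have M0 : 0 < M by rewrite mulr_gt0 ?(lt_le_trans ltr01 A1) // ltr_wpDl.
  have [d [d0 Hd]] := T2 _ (HP s s2) (eps / M) (divr_gt0 e0 M0).
  have K10 : 0 < `|K| + 1 by rewrite ltr_wpDl.
  exists (Num.min (2 - `|s|) (d / (`|K| + 1))); split.
    by rewrite lt_min subr_gt0 s2 divr_gt0.
  move=> h h0; rewrite lt_min => /andP[h2 hd].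
  have sh : `|s + h| < 2.
    by apply: (le_lt_trans (ler_normD _ _)); rewrite -ltrBrDl.
  set p := psi s; set b := psi (s + h).
  have wK : `|b - p| <= `|K| * `|h|.
    apply: (le_trans (HL _ _ s2 sh)); rewrite addrC addKr.
    by apply: ler_wpM2r => //; exact: ler_norm.
  have wd : `|b - p| < d.
    apply: (le_lt_trans wK); apply: (@le_lt_trans _ _ ((`|K| + 1) * `|h|)).
      by apply: ler_wpM2r => //; rewrite lerDl.
    by rewrite mulrC -ltr_pdivlMr.
  have [E1 E0] := Hd b wd.
  have Fe : FI b = FI p by apply: HF.
  move: E1; rewrite Fe subrr sub0r normrN => E1.
  set X := (b - p) *m (j0 p)^T.
  have XE : X = (b - p) *m (Jr p)^T *m c^T by rewrite /X Hc trmx_mul mulmxA.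
  have XB : `|X 0 0| <= eps / M * `|b - p| * (r%:R * `|c^T|).
    apply: (le_trans (mxnorm_entry _ _ _)); rewrite XE.
    apply: (le_trans (mxnorm_mul _ _)).
    have rc : 0 <= r%:R * `|c^T| by rewrite mulr_ge0.
    nra.
  rewrite /comp -/b -/p.
  have -> : g0 b - g0 p = (g0 b - g0 p - X 0 0) + X 0 0 by rewrite subrK.
  apply: (le_trans (ler_normD _ _)).
  apply: (le_trans (lerD E0 XB)).
  have E0' : 0 <= eps / M by rewrite divr_ge0 // ltW.
  have EM : eps / M * M = eps by rewrite divfK // gt_eqF.
  have EA0 : 0 <= eps / M * A by rewrite mulr_ge0 // (le_trans ler01 A1).
  have EAh : 0 <= eps / M * A * `|h| by rewrite mulr_ge0.
  have EAw := ler_wpM2l EA0 wK.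
  have -> : eps * `|h| = eps / M * M * `|h| by rewrite EM.
  move: EA0 EAh EAw; rewrite /M /A; set E := eps / M; move=> EA0 EAh EAw.
  nra.
have s0 : `|(0 : R)| < 2 by rewrite normr0.
have s1 : `|(1 : R)| < 2 by rewrite normr1 ltr1n.
have cont : {within `[0, 1], continuous (g0 \o psi)}.
  apply: continuous_subspace_itv => t; rewrite in_itv /= => /andP[t0 t1].
  have t2 : `|t| < 2 by rewrite ger0_norm // (le_lt_trans t1) // ltr1n.
  apply: differentiable_continuous; apply/derivable1_diffP.
  by case: (D t t2).
have D' : forall t : R, t \in `]0, 1[ -> is_derive t 1 (g0 \o psi) 0.
  move=> t; rewrite in_itv /= => /andP[t0 t1]; apply: D.
  by rewrite ger0_norm ?ltW // (lt_trans t1) // ltr1n.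
have [c _ Hc] := MVT_segment ler01 D' cont.
by move: Hc; rewrite mul0r => /eqP; rewrite subr_eq0 => /eqP.
Qed.

End Aux.

Set Implicit Arguments. Unset Strict Implicit.
Section Fiber.
Variable R : realType.

Lemma fiber_const n r (FI : 'rV[R]_n -> 'rV[R]_r) (g0 : 'rV[R]_n -> R)
    (Jr : 'rV[R]_n -> 'M[R]_(r, n)) (j0 : 'rV[R]_n -> 'rV[R]_n)
    (x1 : 'rV[R]_n) (dl : R) (B : 'M[R]_(n, r)) :
  0 < dl ->
  Jr x1 *m B = 1%:M ->
  (forall eps : R, 0 < eps -> exists d : R, 0 < d /\ forall a b,
     `|a - x1| < d -> `|b - x1| < d ->
     `|FI b - FI a - (b - a) *m (Jr x1)^T| <= eps * `|b - a|) ->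
  (forall p, `|p - x1| < dl -> forall eps : R, 0 < eps -> exists d : R, 0 < d /\
     forall b, `|b - p| < d ->
       `|FI b - FI p - (b - p) *m (Jr p)^T| <= eps * `|b - p| /\
       `|g0 b - g0 p - ((b - p) *m (j0 p)^T) 0 0| <= eps * `|b - p|) ->
  (forall p, `|p - x1| < dl -> exists c : 'rV[R]_r, j0 p = c *m Jr p) ->
  exists eta : R, 0 < eta /\ forall x', `|x' - x1| < eta -> FI x' = FI x1 ->
    g0 x' = g0 x1.
Proof.
move=> dl0 HB T1 T2 RR.
set X1 := (Jr x1)^T; set D := B^T.
have DX : D *m X1 = 1%:M by rewrite /D /X1 -trmx_mul HB trmx1.
set cD := r%:R * `|D|.
have cD0 : 0 <= cD by rewrite mulr_ge0.
set eps := (2 * (cD + 1))^-1.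
have eps0 : 0 < eps by rewrite invr_gt0 mulr_gt0 // ltr_wpDl.
have epscD : eps * cD <= 2^-1.
  rewrite /eps invfM mulrAC ler_pdivrMr ?ltr_wpDl // ler_pM2l ?invr_gt0 //.
  by rewrite lerDl.
have [d [d0 Hd]] := T1 eps eps0.
set dl' := Num.min d dl.
have dl'0 : 0 < dl' by rewrite lt_min d0 dl0.
have dl'd : dl' <= d by rewrite ge_min lexx.
have dl'dl : dl' <= dl by rewrite ge_min lexx orbT.
set L := n%:R * `|X1| + eps.
have L0 : 0 <= L by rewrite addr_ge0 ?mulr_ge0 // ltW.
have Lip : forall a b, `|a - x1| < dl' -> `|b - x1| < dl' ->
    `|FI b - FI a| <= L * `|b - a|.
  move=> a b ad bd.
  have -> : FI b - FI a = (FI b - FI a - (b - a) *m X1) + (b - a) *m X1 by rewrite subrK.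
  apply: (le_trans (ler_normD _ _)).
  have h1 := Hd a b (lt_le_trans ad dl'd) (lt_le_trans bd dl'd).
  have h2 := mxnorm_mul (b - a) X1.
  rewrite /L mulrDl addrC; apply: lerD => //.
  by rewrite mulrAC.
set rho := dl' / (2 * (cD + 1)).
have rho0 : 0 < rho by rewrite divr_gt0 // mulr_gt0 // ltr_wpDl.
have rhoE : rho * (2 * (cD + 1)) = dl' by rewrite /rho divfK // gt_eqF // mulr_gt0 // ltr_wpDl.
have cDrho : cD * rho < dl' / 2 by nra.
set eta := Num.min (dl' / 2) (rho / (2 * (L + 1))).
have eta0 : 0 < eta by rewrite lt_min !divr_gt0 // mulr_gt0 // ltr_wpDl.
have etadl : eta <= dl' / 2 by rewrite ge_min lexx.
have Leta : L * eta <= rho / 2.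
  have e1 : eta <= rho / (2 * (L + 1)) by rewrite ge_min lexx orbT.
  set q := rho / (2 * (L + 1)) in e1.
  have qE : q * (2 * (L + 1)) = rho by rewrite /q divfK // gt_eqF // mulr_gt0 // ltr_wpDl.
  have q0 : 0 <= q by apply: divr_ge0; [exact: ltW | rewrite mulr_ge0 // addr_ge0].
  nra.
have C1 : forall v (z : 'rV[R]_r), `|v - x1| < eta -> `|z| <= rho ->
    `|v + z *m D - x1| < dl'.
  move=> v z vx zr.
  have -> : v + z *m D - x1 = (v - x1) + z *m D by rewrite addrAC.
  apply: (le_lt_trans (ler_normD _ _)).
  have h := mxnorm_mul z D.
  have h2 : r%:R * `|z| * `|D| <= cD * rho.
    by rewrite /cD mulrAC ler_wpM2l.
  lra.
set T := fun v (z : 'rV[R]_r) => z - (FI (v + z *m D) - FI x1).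
have C2 : forall v (z z' : 'rV[R]_r), `|v - x1| < eta -> `|z| <= rho -> `|z'| <= rho ->
    `|T v z - T v z'| <= 2^-1 * `|z - z'|.
  move=> v z z' vx zr z'r.
  set b := v + z *m D; set a := v + z' *m D.
  have ba : b - a = (z - z') *m D.
    by rewrite /b /a mulmxBl; apply/rowP => i; rewrite !mxE; ring.
  have baX : (b - a) *m X1 = z - z' by rewrite ba -mulmxA DX mulmx1.
  have -> : T v z - T v z' = - (FI b - FI a - (b - a) *m X1).
    by rewrite baX /T -/b -/a; apply/rowP => i; rewrite !mxE; ring.
  rewrite normrN.
  have h1 := Hd a b (lt_le_trans (C1 _ _ vx z'r) dl'd) (lt_le_trans (C1 _ _ vx zr) dl'd).
  have h2 : `|b - a| <= cD * `|z - z'|.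
    by rewrite ba; apply: (le_trans (mxnorm_mul _ _)); rewrite /cD mulrAC.
  have h3 := ler_wpM2l (ltW eps0) h2.
  have h4 : 0 <= `|z - z'| by [].
  nra.
have C3 : forall v (z : 'rV[R]_r), `|v - x1| < eta -> `|z| <= rho -> `|T v z| <= rho.
  move=> v z vx zr.
  have z0 : `|(0 : 'rV[R]_r)| <= rho by rewrite normr0 ltW.
  have h1 := C2 v z 0 vx zr z0.
  have T0 : T v 0 = - (FI v - FI x1) by rewrite /T mul0mx addr0 sub0r.
  have h2 : `|T v 0| <= L * `|v - x1|.
    rewrite T0 normrN; apply: Lip; first by rewrite subrr normr0.
    lra.
  have h3 : `|T v z| <= `|T v z - T v 0| + `|T v 0|.
    by rewrite -{1}(subrK (T v 0) (T v z)) ler_normD.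
  have h4 := ler_wpM2l L0 (ltW vx).
  rewrite subr0 in h1.
  lra.
have FPex : forall v, exists z : 'rV[R]_r,
    `|v - x1| < eta -> `|z| <= rho /\ T v z = z.
  move=> v; case: (pselect (`|v - x1| < eta)) => vx; last by exists 0.
  set U := closed_ball_ Num.norm (0 : 'rV[R]_r) rho.
  have U0 : U 0 by rewrite /U /closed_ball_ /= subrr normr0 ltW.
  have TU : forall z, U z -> U (T v z).
    by move=> z; rewrite /U /closed_ball_ /= !sub0r !normrN => zr; exact: C3.
  have Tc : forall z z', U z -> U z' -> `|T v z - T v z'| <= 2^-1 * `|z - z'|.
    by move=> z z'; rewrite /U /closed_ball_ /= !sub0r !normrN => zr z'r; exact: C2.
  have [z [Uz Tz]] := @fixpt R r U (T v) 0 (@closed_closed_ball_ _ _ _ _) U0 TU Tc.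
  by exists z => _; split => //; move: Uz; rewrite /U /closed_ball_ /= sub0r normrN.
have [zf Hzf] := choice FPex.
have FP : forall v, `|v - x1| < eta -> FI (v + zf v *m D) = FI x1.
  move=> v vx; have [_ Tz] := Hzf v vx.
  move: Tz; rewrite /T => /eqP; rewrite subr_eq addrC -subr_eq subrr eq_sym subr_eq0.
  by move/eqP.
have Uniq : forall v (z : 'rV[R]_r), `|v - x1| < eta -> `|z| <= rho -> T v z = z ->
    z = zf v.
  move=> v z vx zr Tz; have [zfr Tzf] := Hzf v vx.
  have h := C2 v z (zf v) vx zr zfr; rewrite Tz Tzf in h.
  have h0 : `|z - zf v| = 0 by have := normr_ge0 (z - zf v); lra.
  by apply/eqP; rewrite -subr_eq0 -normr_eq0 h0.
have ZL : forall v v', `|v - x1| < eta -> `|v' - x1| < eta ->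
    `|zf v' - zf v| <= 2 * L * `|v' - v|.
  move=> v v' vx v'x; have [zr Tz] := Hzf v vx; have [z'r Tz'] := Hzf v' v'x.
  set z := zf v in zr Tz *; set z' := zf v' in z'r Tz' *.
  have e : z' - z = (T v' z' - T v' z) + (T v' z - T v z) by rewrite Tz' Tz addrA subrK.
  have h1 := C2 v' z' z v'x z'r zr.
  have h2 : `|T v' z - T v z| <= L * `|v' - v|.
    have -> : T v' z - T v z = - (FI (v' + z *m D) - FI (v + z *m D)).
      by rewrite /T; apply/rowP => i; rewrite !mxE; ring.
    rewrite normrN.
    have -> : v' - v = (v' + z *m D) - (v + z *m D) by apply/rowP => i; rewrite !mxE; ring.
    by apply: Lip; apply: C1.
  have h3 : `|z' - z| <= `|T v' z' - T v' z| + `|T v' z - T v z| by rewrite e ler_normD.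
  lra.
have eta20 : 0 < eta / 2 by rewrite divr_gt0.
exists (eta / 2); split => // x' x'x FIx'.
set X := `|x' - x1|.
set v := fun s : R => x1 + s *: (x' - x1).
have vx : forall s : R, `|s| < 2 -> `|v s - x1| < eta.
  move=> s s2; rewrite /v addrAC subrr add0r normrZ -/X.
  have X0 : 0 <= X := normr_ge0 _.
  have h := ler_wpM2l (normr_ge0 s) (ltW x'x).
  have h2 : 0 < (2 - `|s|) * (eta / 2) by rewrite mulr_gt0 // subr_gt0.
  have e2 : eta / 2 * 2 = eta by rewrite divfK.
  rewrite -/X in h; nra.
have vv : forall s s' : R, v s' - v s = (s' - s) *: (x' - x1).
  by move=> s s'; rewrite /v; apply/rowP => i; rewrite !mxE; ring.
set psi := fun s : R => v s + zf (v s) *m D.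
have z0 : zf x1 = 0.
  apply/esym/Uniq; rewrite ?subrr ?normr0 //; first exact: ltW.
  by rewrite /T mul0mx addr0 !subrr.
have z1 : zf x' = 0.
  apply/esym/Uniq; rewrite ?normr0 //; first by apply: (lt_trans x'x); rewrite ltr_pdivrMr // ltr_pMr // ltr1n.
    exact: ltW.
  by rewrite /T mul0mx addr0 FIx' !subrr.
have psi0 : psi 0 = x1 by rewrite /psi /v scale0r addr0 z0 mul0mx addr0.
have psi1 : psi 1 = x' by rewrite /psi /v scale1r [x1 + _]addrC subrK z1 mul0mx addr0.
have HP : forall s : R, `|s| < 2 -> `|psi s - x1| < dl.
  move=> s s2; apply: (lt_le_trans _ dl'dl); apply: C1 (vx s s2) _.
  by have [] := Hzf _ (vx s s2).
have HF : forall s s' : R, `|s| < 2 -> `|s'| < 2 -> FI (psi s') = FI (psi s).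
  by move=> s s' s2 s'2; rewrite /psi !FP //; exact: vx.
have HL : forall s s' : R, `|s| < 2 -> `|s'| < 2 ->
    `|psi s' - psi s| <= (X * (1 + cD * (2 * L))) * `|s' - s|.
  move=> s s' s2 s'2.
  have -> : psi s' - psi s = (v s' - v s) + (zf (v s') - zf (v s)) *m D.
    by rewrite /psi mulmxBl; apply/rowP => i; rewrite !mxE; ring.
  apply: (le_trans (ler_normD _ _)).
  have h1 : `|v s' - v s| = `|s' - s| * X by rewrite vv normrZ.
  have h2 := ZL _ _ (vx s s2) (vx s' s'2).
  have h3 : `|(zf (v s') - zf (v s)) *m D| <= cD * `|zf (v s') - zf (v s)|.
    by apply: (le_trans (mxnorm_mul _ _)); rewrite /cD mulrAC.
  have h4 := ler_wpM2l cD0 h2.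
  rewrite h1 in h4 |- *.
  have X0 : 0 <= X := normr_ge0 _.
  have h5 : 0 <= `|s' - s| := normr_ge0 _.
  nra.
have := @path_const R n r FI g0 Jr j0 (fun p => `|p - x1| < dl) psi
  (X * (1 + cD * (2 * L))) T2 RR HP HF HL.
by rewrite psi0 psi1.
Qed.


End Fiber.

Set Implicit Arguments. Unset Strict Implicit.
Section Core.
Variable R : realType.

Lemma not_onto r m (f : 'I_r -> 'I_m) : injective f -> (r < m)%N ->
  exists i0, forall a, f a != i0.
Proof.
move=> fi rm; apply: contrapT => H.
have all_in : forall i, i \in codom f.
  move=> i; apply: contrapT => /negP ni; apply: H; exists i => a.
  by apply: contra ni => /eqP <-; exact: codom_f.
have Ec : #|codom f| = #|'I_m| by apply: eq_card => i; rewrite all_in.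
by move: Ec rm; rewrite card_codom // !card_ord => ->; rewrite ltnn.
Qed.

Lemma rowfree_near n r (M : 'M[R]_(r, n)) (M1 : 'M[R]_(r, n)) (B : 'M[R]_(n, r)) :
  M1 *m B = 1%:M ->
  `|M - M1| * (r%:R * (n%:R * `|B|)) < 1 -> row_free M.
Proof.
move=> HB Hs; apply: inj_row_free => z zM.
have e : z = - (z *m (M - M1) *m B).
  by rewrite mulmxBr zM sub0r mulNmx opprK -(mulmxA z M1 B) HB mulmx1.
have a1 := mxnorm_mul (z *m (M - M1)) B.
have a2 := mxnorm_mul z (M - M1).
have hz : `|z| <= n%:R * (r%:R * `|z| * `|M - M1|) * `|B|.
  rewrite {1}e normrN; apply: (le_trans a1); apply: ler_wpM2r => //.
  by apply: ler_wpM2l.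
have h0 : `|z| = 0.
  have := normr_ge0 z; have := normr_ge0 (M - M1); have := normr_ge0 B.
  have : (0 : R) <= r%:R := ler0n _ _; have : (0 : R) <= n%:R := ler0n _ _.
  nra.
by apply/eqP; rewrite -normr_eq0 h0.
Qed.

Lemma dense_fullrank n m p (phi : nat -> 'rV[R]_n -> R) (S : set 'rV[R]_n) :
  (m <= p)%N -> (forall k, (k < m)%N -> Ck 1 (phi k)) -> open S ->
  open_map_on (fun x => \row_(k < p) phi k x) S ->
  forall x0, S x0 -> forall e : R, 0 < e -> exists x', S x' /\ `|x' - x0| < e /\
    \rank (\matrix_(k < m, l < n) 'D_(delta_mx 0 l) (phi k) x') = m.
Proof.
move=> mp C1 oS oH x0 Sx0 e e0.
set J := fun x => \matrix_(k < m, l < n) 'D_(delta_mx 0 l) (phi k) x.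
apply: contrapT => Hn.
have Hn' : forall x', S x' -> `|x' - x0| < e -> (\rank (J x') < m)%N.
  move=> x' Sx' x'e; rewrite ltn_neqAle rank_leq_row andbT; apply/negP => /eqP E.
  by apply: Hn; exists x'.
have [d [d0 Hd]] := nearball (open_nbhs_nbhs (conj oS Sx0)).
set dl := Num.min d e.
have dl0 : 0 < dl by rewrite lt_min d0 e0.
have dld : dl <= d by rewrite ge_min lexx.
have dle : dl <= e by rewrite ge_min lexx orbT.
pose P := fun r => `[< exists x, `|x - x0| < dl /\ \rank (J x) = r >].
have exP : exists r, P r by exists (\rank (J x0)); apply/asboolP; exists x0; rewrite subrr normr0.
have ubP : forall r, P r -> (r <= m)%N.
  by move=> r /asboolP [x [_ <-]]; exact: rank_leq_row.
case: (ex_maxnP exP ubP) => rmax /asboolP [x1 [x1d rkE]] maxr.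
have rkmax : forall x, `|x - x0| < dl -> (\rank (J x) <= \rank (J x1))%N.
  by move=> x xd; rewrite rkE; apply: maxr; apply/asboolP; exists x.
have Sx1 : forall x, `|x - x0| < dl -> S x.
  by move=> x xd; apply: Hd; exact: lt_le_trans xd dld.
have rklt : (\rank (J x1) < m)%N.
  by apply: Hn' (Sx1 _ x1d) (lt_le_trans x1d dle).
set dl1 := dl - `|x1 - x0|.
have dl10 : 0 < dl1 by rewrite subr_gt0.
have B1 : forall x, `|x - x1| < dl1 -> `|x - x0| < dl.
  move=> x xd; have -> : x - x0 = (x - x1) + (x1 - x0) by rewrite addrA subrK.
  by apply: (le_lt_trans (ler_normD _ _)); rewrite -ltrBrDr.
set rk := \rank (J x1).
set fI := maxrankfun (J x1).
have fIinj : injective (fun a : 'I_rk => fI a) by move=> a b /maxrankfun_inj.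
have [i0 Hi0] := not_onto fIinj rklt.
set Jr := fun x => rowsub fI (J x).
have RF1 : row_free (Jr x1) := maxrowsub_free (J x1).
have [B HB] := row_freeP RF1.
set c := rk%:R * (n%:R * `|B|).
have c0 : 0 <= c by rewrite mulr_ge0 // mulr_ge0.
set ka := (c + 1)^-1.
have ka0 : 0 < ka / 2 by rewrite divr_gt0 // invr_gt0 ltr_wpDl.
have Cd : forall k, (k < m)%N -> forall v, continuous (fun x => 'D_v (phi k) x).
  by move=> k km v; have [_ ] := C1 k km; exact.
have Hnear : \forall x \near x1, forall a : 'I_rk, forall l : 'I_n,
    `|'D_(delta_mx 0 l) (phi (fI a)) x1 - 'D_(delta_mx 0 l) (phi (fI a)) x| < ka / 2.
  exact: (filter_forall _ (fun a : 'I_rk => filter_forall _ (fun l : 'I_n =>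
    (cvgrPdist_lt _ _).1 (Cd _ (ltn_ord (fI a)) (delta_mx 0 l) x1) _ ka0))).
have [dR [dR0 HdR]] := nearball Hnear.
set dl2 := Num.min dl1 dR.
have dl20 : 0 < dl2 by rewrite lt_min dl10 dR0.
have dl2a : dl2 <= dl1 by rewrite ge_min lexx.
have dl2b : dl2 <= dR by rewrite ge_min lexx orbT.
have RFx : forall x, `|x - x1| < dl2 -> row_free (Jr x).
  move=> x xd; apply: (rowfree_near (M1 := Jr x1) HB).
  have h : `|Jr x - Jr x1| <= ka / 2.
    apply: mxnorm_le; first exact: ltW.
    move=> a l; rewrite !mxE distrC; apply: ltW; apply: HdR.
    exact: lt_le_trans xd dl2b.
  have kc : ka * (c + 1) = 1 by rewrite mulVf // gt_eqF // ltr_wpDl.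
  have := normr_ge0 (Jr x - Jr x1).
  rewrite -/c; nra.
have RR : forall x, `|x - x1| < dl2 -> exists cc : 'rV[R]_rk, row i0 (J x) = cc *m Jr x.
  move=> x xd.
  have sub1 : (Jr x <= J x)%MS by exact: rowsub_sub.
  have rkx : \rank (Jr x) = rk by move/eqP: (RFx x xd).
  have rkJ : (\rank (J x) <= rk)%N by apply: rkmax; apply: B1; exact: lt_le_trans xd dl2a.
  have sub2 : (J x <= Jr x)%MS.
    have [_ <-] := mxrank_leqif_sup sub1.
    by rewrite eqn_leq mxrankS // rkx rkJ.
  by apply/submxP; exact: submx_trans (row_sub _ _) sub2.
set FI := fun x => \row_(a < rk) phi (fI a) x.
have FIent : forall y a b (i : 'I_rk),
    (FI b - FI a - (b - a) *m (Jr y)^T) 0 i =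
    phi (fI i) b - phi (fI i) a - \sum_(l < n) (b - a) 0 l * 'D_(delta_mx 0 l) (phi (fI i)) y.
  move=> y a b i; rewrite !mxE; congr (_ - _); apply: eq_bigr => l _; rewrite !mxE.
  by [].
have T1 : forall eps : R, 0 < eps -> exists d : R, 0 < d /\ forall a b,
    `|a - x1| < d -> `|b - x1| < d ->
    `|FI b - FI a - (b - a) *m (Jr x1)^T| <= eps * `|b - a|.
  move=> eps eps0.
  have [dd [dd0 Hd']] := @fin_min R rk (fun i d => forall a b, `|a - x1| < d -> `|b - x1| < d ->
      `|phi (fI i) b - phi (fI i) a - \sum_(l < n) (b - a) 0 l * 'D_(delta_mx 0 l) (phi (fI i)) x1|
        <= eps * `|b - a|)
    (fun i d d' d'0 d'd H a b ad bd => H a b (lt_le_trans ad d'd) (lt_le_trans bd d'd))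
    (fun i => taylor x1 (C1 _ (ltn_ord (fI i))) eps0).
  exists dd; split => // a b ad bd.
  apply: mxnorm_le; first by rewrite mulr_ge0 // ltW.
  by move=> i0' i; rewrite (ord1 i0') FIent; apply: Hd'.
set g0 := phi i0.
set j0 := fun x => row i0 (J x).
have T2 : forall q, `|q - x1| < dl2 -> forall eps : R, 0 < eps -> exists d : R, 0 < d /\
    forall b, `|b - q| < d ->
      `|FI b - FI q - (b - q) *m (Jr q)^T| <= eps * `|b - q| /\
      `|g0 b - g0 q - ((b - q) *m (j0 q)^T) 0 0| <= eps * `|b - q|.
  move=> q _ eps eps0.
  have Tq : forall i : 'I_rk, exists d' : R, 0 < d' /\ forall b, `|b - q| < d' ->
      `|phi (fI i) b - phi (fI i) q - \sum_(l < n) (b - q) 0 l * 'D_(delta_mx 0 l) (phi (fI i)) q|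
        <= eps * `|b - q|.
    move=> i; have [d' [d'0 Hd3]] := taylor q (C1 _ (ltn_ord (fI i))) eps0.
    by exists d'; split => // b bd; apply: Hd3 => //; rewrite subrr normr0.
  have [d1 [d10 Hd1]] := @fin_min R rk (fun i d' => forall b, `|b - q| < d' ->
      `|phi (fI i) b - phi (fI i) q - \sum_(l < n) (b - q) 0 l * 'D_(delta_mx 0 l) (phi (fI i)) q|
        <= eps * `|b - q|)
    (fun i d' d'' d''0 d''d H b bd => H b (lt_le_trans bd d''d)) Tq.
  have [d2 [d20 Hd2]] := taylor q (C1 _ (ltn_ord i0)) eps0.
  exists (Num.min d1 d2); split; first by rewrite lt_min d10 d20.
  move=> b; rewrite lt_min => /andP[bd1 bd2]; split.
    apply: mxnorm_le; first by rewrite mulr_ge0 // ltW.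
    by move=> i0' i; rewrite (ord1 i0') FIent; apply: Hd1.
  have -> : ((b - q) *m (j0 q)^T) 0 0 =
      \sum_(l < n) (b - q) 0 l * 'D_(delta_mx 0 l) (phi i0) q.
    by rewrite !mxE; apply: eq_bigr => l _; rewrite !mxE.
  by apply: Hd2 => //; rewrite subrr normr0.
have [eta [eta0 Heta]] := @fiber_const R n rk FI g0 Jr j0 x1 dl2 B dl20 HB T1 T2 RR.
set H := fun x => \row_(k < p) phi k x.
set e2 := Num.min eta dl2.
have e20 : 0 < e2 by rewrite lt_min eta0 dl20.
have e2eta : e2 <= eta by rewrite ge_min lexx.
have e2dl : e2 <= dl2 by rewrite ge_min lexx orbT.
have VS : ball x1 e2 `<=` S.
  move=> x; rewrite -ball_normE /= distrC => xd; apply: Sx1; apply: B1.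
  by apply: (lt_le_trans xd); exact: le_trans e2dl dl2a.
have oHV : open (H @` ball x1 e2) by apply: oH => //; exact: ball_open.
have HVx1 : (H @` ball x1 e2) (H x1) by exists x1 => //; exact: ballxx.
have [tau [tau0 Htau]] := nearball (open_nbhs_nbhs (conj oHV HVx1)).
set i0' := widen_ord mp i0.
set y := H x1 + (tau / 2) *: (delta_mx 0 i0' : 'rV[R]_p).
have dn : `|(delta_mx 0 i0' : 'rV[R]_p)| <= 1.
  apply: mxnorm_le => // a b; rewrite mxE.
  by case: (_ && _); rewrite ?normr1 ?normr0.
have yd : `|y - H x1| < tau.
  rewrite /y addrC addKr normrZ gtr0_norm ?divr_gt0 //.
  have t2 : tau / 2 < tau by rewrite ltr_pdivrMr // ltr_pMr // ltr1n.
  by apply: (le_lt_trans _ t2); rewrite ler_piMr // ltW // divr_gt0.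
have [x' Vx' Hx'] := Htau y yd.
have ent : forall k : 'I_p, phi k x' = phi k x1 + tau / 2 * (delta_mx 0 i0' : 'rV[R]_p) 0 k.
  by move=> k; have := congr1 (fun M : 'rV[R]_p => M 0 k) Hx'; rewrite /y /H !mxE.
have FIx' : FI x' = FI x1.
  apply/rowP => a; rewrite !mxE.
  have := ent (widen_ord mp (fI a)); rewrite /= mxE /=.
  have -> : (widen_ord mp (fI a) == i0') = false.
    by apply/negbTE; apply: contra (Hi0 a) => /eqP [] /val_inj ->.
  by rewrite mulr0 addr0.
have x'eta : `|x' - x1| < eta.
  by move: Vx'; rewrite -ball_normE /= distrC => xd; exact: lt_le_trans xd e2eta.
have := Heta x' x'eta FIx'; rewrite /g0.
have := ent i0'; rewrite /= mxE !eqxx /= mulr1 => -> /eqP.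
rewrite -{2}[phi i0 x1]addr0 => /eqP /addrI t0.
by have := divr_gt0 tau0 (ltr0Sn R 1); rewrite t0 ltxx.
Qed.




End Core.

Unset Implicit Arguments.

Lemma row_continuous (R : realType) n p (phi : nat -> 'rV[R]_n -> R) :
  (forall k, (k < p)%N -> continuous (phi k)) ->
  continuous (fun x => \row_(k < p) phi k x).
Proof.
move=> cphi x; apply/(@cvgrPdist_le _ _ _ (nbhs x) (nbhs_filter x)) => eps eps0.
have H := @filter_forall _ _ _ (nbhs x) (nbhs_filter x) (fun k : 'I_p =>
  (@cvgrPdist_lt _ _ _ (nbhs x) (nbhs_filter x) _ _).1 (cphi k (ltn_ord k) x) _ eps0).
apply: filterS H => y Hy.
apply: mxnorm_le; first exact: ltW.
by move=> i k; rewrite (ord1 i) !mxE; apply: ltW; exact: Hy.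
Qed.

Lemma seq_cvg (R : realType) n (u : nat -> 'rV[R]_n) (a : 'rV[R]_n) :
  (forall k, `|u k - a| < harmonic k) -> u @ \oo --> a.
Proof.
move=> H; apply/cvgrPdist_lt => eps eps0.
have Hh := (cvgrPdist_lt _ _).1 (@cvg_harmonic R) eps eps0.
have K : forall k, `|0 - harmonic k| < eps -> `|a - u k| < eps.
  move=> k; rewrite sub0r normrN => hk.
  by rewrite distrC; apply: (lt_trans (H k)); apply: le_lt_trans hk; exact: ler_norm.
exact: (filterS K (Hh eventually_filter)).
Qed.

Theorem lemma3 (R : realType) (n : nat)
    (f g : 'rV[R]_n -> 'rV[R]_n) (h : 'rV[R]_n -> R)
    (S : set 'rV[R]_n) (j : nat) :
  Ck j f -> Ck j g -> Ck j h ->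
  open S ->
  (2 <= j)%N -> (j <= n)%N ->
  open_map_on (Hmap f h j) S ->
  PropertyB f h S j.
Proof.
move=> Cf _ Ch oS j2 jn oH xa xb Sxa Sxb neq Heq.
have C1k : forall k, (k < j.-1)%N -> Ck 1 (lieN f h k).
  move=> k kj; apply: (@Ck_le R n _ 1 (j - k)%N); last first.
    by apply: Ck_lieN => //; apply: leq_trans (ltnW kj) (leq_pred j).
  by rewrite subn_gt0; apply: leq_trans kj (leq_pred j).
have Hc : continuous (Hmap f h j).
  apply: row_continuous => k kj; have := @Ck_lieN R n j f h k Cf Ch (ltnW kj).
  by move/(@Ck_le R n _ 0 _ _ (leq0n _)).
have mp : (j.-1 <= j)%N by exact: leq_pred.
have step : forall k : nat, exists xy : 'rV[R]_n * 'rV[R]_n,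
    [/\ S xy.1 /\ S xy.2, `|xy.1 - xa| < harmonic k, `|xy.2 - xb| < harmonic k,
     Hmap f h j xy.1 = Hmap f h j xy.2 &
     \rank (jacH f h j.-1 xy.1) = j.-1].
  move=> k.
  set Vb := ball xb (harmonic k) `&` S.
  have oVb : open Vb by apply: openI => //; exact: ball_open.
  have oO : open (Hmap f h j @` Vb) by apply: oH => //; move=> x [].
  have Oxa : (Hmap f h j @` Vb) (Hmap f h j xa).
    by exists xb; [split => //; apply: ballxx; exact: harmonic_gt0 | exact/esym].
  have nO : \forall x \near xa, (Hmap f h j @` Vb) (Hmap f h j x).
    exact: (Hc xa) (open_nbhs_nbhs (conj oO Oxa)).
  have [dd [dd0 Hdd]] := nearball nO.
  set e := Num.min dd (harmonic k).
  have e0 : 0 < e by rewrite lt_min dd0 harmonic_gt0.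
  have [x' [Sx' [x'e rk]]] := @dense_fullrank R n j.-1 j (lieN f h) S mp C1k oS oH xa Sxa e e0.
  have [y [Vy Hy]] : exists y, Vb y /\ Hmap f h j y = Hmap f h j x'.
    have edd : e <= dd by rewrite ge_min lexx.
    have [y Vy Hy] := Hdd x' (lt_le_trans x'e edd).
    by exists y.
  exists (x', y); split => //=.
  - by split => //; case: Vy.
  - by apply: (lt_le_trans x'e); rewrite ge_min lexx orbT.
  - by case: Vy; rewrite -ball_normE /= distrC.
have [xy Hxy] := choice step.
exists (fun k => (xy k).1), (fun k => (xy k).2); split; last split.
- by move=> k; have [[]] := Hxy k.
- have c1 : (fun k => (xy k).1) @ \oo --> xa by apply: seq_cvg => k; have [] := Hxy k.
  have c2 : (fun k => (xy k).2) @ \oo --> xb by apply: seq_cvg => k; have [] := Hxy k.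
  exact: cvg_pair c1 c2.
- by move=> k; have [_ _ _ ? ?] := Hxy k; split => //; left.
Qed.
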